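(* Let $A$ be a set and $\phi$ a linear form on the span of nonempty words over $A$. Extend $\phi$ to a linear form on $H_{\mathcal S}(A)$ by setting $\phi(T\otimes w)=\phi(w)$ if $T$ is a corolla (a tree whose only internal vertex is the root), $\phi(T\otimes w)=0$ for the other decorated trees, and $\phi=0$ on $1$ and on products of two or more decorated trees. Let $\Phi$ be the character (unital algebra morphism $H_{\mathcal S}(A)\to\mathbb{C}$) that agrees with $\phi$ on decorated trees. Let $\kappa$ be the linear form on $H_{\mathcal S}(A)$ vanishing on $1$ and on products of two or more decorated trees, and given on decorated trees by $$\kappa(T\otimes a_1\cdots a_n)=\begin{cases}(-1)^{i(T)-1}\displaystyle\prod_{v\text{ internal vertex of }T}\phi\Big(\prod_{v\measuredangle i}a_i\Big)&\text{if }T\in\mathrm{PST}_n,\\ 0&\text{otherwise.}\end{cases}$$ Then $\Phi=\epsilon+\kappa\prec\Phi$.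
   Context: A reduced plane tree is a rooted plane tree in which every internal node has at least two children; its weight is its number of leaves minus 1, and $i(T)$ is its number of internal vertices. A tree is prime if it has at least two leaves and the rightmost child of its root is a leaf; $\mathrm{PST}_n$ is the set of prime trees of weight $n$. For $T$ with leaves $\ell_1,\dots,\ell_{n+1}$ from left to right, $v\measuredangle i$ means that the internal vertex $v$ is the lowest common ancestor of $\ell_i$ and $\ell_{i+1}$ ($v$ has a clear view to the $i$th sector); the inner product is taken in increasing order of $i$. $H_{\mathcal S}(A)$ is the algebra with basis finite products (concatenations) of $A$-decorated trees $T\otimes a_1\cdots a_n$ (a tree of weight $n\ge1$ with sectors labeled left to right by $a_1,\dots,a_n\in A$), unit $1$ the empty product. An admissible cut of $T$ is a (possibly empty) set $c$ of internal vertices with at most one vertex on each root-to-leaf path; $P^c(T)$ is the left-to-right product of the subtrees rooted at vertices of $c$, each decorated by the letters of the sectors seen by its vertices, and $R^c(T)$ is $T$ with these subtrees replaced by leaves, decorated by the letters of the sectors seen by its remaining internal vertices. $\Delta(T\otimes w)=\sum_cR^c(T)\otimes P^c(T)$, extended multiplicatively; $\Delta^+_{\prec}(T\otimes w)$ is this sum restricted to cuts for which the rightmost leaf of $T$ remains in $R^c(T)$, and $\Delta^+_{\prec}(x_1\cdots x_s)=\Delta^+_{\prec}(x_1)\Delta(x_2\cdots x_s)$. For linear forms $f,g$ on $H_{\mathcal S}(A)$, $(f\prec g)(1)=0$ and $(f\prec g)(x)=m\circ(f\otimes g)\circ\Delta^+_{\prec}(x)$ for $x$ in the augmentation ideal,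 $m$ being multiplication in $\mathbb{C}$. $\epsilon$ is the counit: $\epsilon(1)=1$ and $\epsilon=0$ on the augmentation ideal. *)

(* Defs.v *)
From mathcomp Require Import all_boot all_order all_algebra.
Set Implicit Arguments. Unset Strict Implicit. Unset Printing Implicit Defensive.
Import Order.TTheory GRing.Theory Num.Theory.

Section DTrees.
Variable A : Type.

(* A plane tree whose sectors carry letters of A.  [DNode c r] is an internal
   vertex with children [c :: map snd r]; the letter in [(a, t) \in r] is the
   label of the sector lying between the child preceding [t] and [t], i.e. of
   the sector to which this vertex has a clear view (it is the lowest common
   ancestor of the two leaves bounding this sector). *)
Inductive dtree : Type :=
| DLeaf
| DNode of dtree & seq (A * dtree).

Definition is_node (t : dtree) : bool := if t is DNode _ _ then true else false.

Definition children (t : dtree) : seq dtree :=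
  if t is DNode c r then c :: map snd r else [::].

(* letters of the sectors seen by the root, in increasing order of i *)
Definition root_letters (t : dtree) : seq A :=
  if t is DNode _ r then map fst r else [::].

Fixpoint reduced (t : dtree) : bool :=
  match t with
  | DLeaf => true
  | DNode c r =>
      [&& ~~ nilp r, reduced c &
        (fix aux (r : seq (A * dtree)) : bool :=
           match r with [::] => true | (_, t') :: r' => reduced t' && aux r' end) r]
  end.

Fixpoint word (t : dtree) : seq A :=
  match t with
  | DLeaf => [::]
  | DNode c r =>
      word c ++
        (fix aux (r : seq (A * dtree)) : seq A :=
           match r with [::] => [::] | (a, t') :: r' => a :: word t' ++ aux r' end) r
  end.

(* weight = number of leaves - 1 = number of sectors *)
Definition weight (t : dtree) : nat := size (word t).

(* a decorated tree T (x) a_1...a_n : reduced tree of weight n >= 1 *)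
Definition dtree_ok (t : dtree) : bool := is_node t && reduced t.

(* vertices are addressed by the sequence of child indices from the root *)
Definition child (t : dtree) (i : nat) : option dtree :=
  if i < size (children t) then Some (nth DLeaf (children t) i) else None.

Fixpoint subtree (t : dtree) (p : seq nat) : option dtree :=
  match p with
  | [::] => Some t
  | i :: p' => if child t i is Some t' then subtree t' p' else None
  end.

(* addresses of internal vertices, in preorder (= left-to-right order for
   vertices none of which is an ancestor of another) *)
Fixpoint ivs (t : dtree) : seq (seq nat) :=
  match t with
  | DLeaf => [::]
  | DNode c r =>
      [::] :: [seq 0 :: p | p <- ivs c] ++
        (fix aux (k : nat) (r : seq (A * dtree)) : seq (seq nat) :=
           match r with
           | [::] => [::]
           | (_, t') :: r' => [seq k :: p | p <- ivs t'] ++ aux k.+1 r'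
           end) 1 r
  end.

Fixpoint lvs (t : dtree) : seq (seq nat) :=
  match t with
  | DLeaf => [:: [::]]
  | DNode c r =>
      [seq 0 :: p | p <- lvs c] ++
        (fix aux (k : nat) (r : seq (A * dtree)) : seq (seq nat) :=
           match r with
           | [::] => [::]
           | (_, t') :: r' => [seq k :: p | p <- lvs t'] ++ aux k.+1 r'
           end) 1 r
  end.

Definition nint (t : dtree) : nat := size (ivs t).

Definition rightmost_leaf (t : dtree) : seq nat := last [::] (lvs t).

Fixpoint subsets (T : Type) (s : seq T) : seq (seq T) :=
  match s with
  | [::] => [:: [::]]
  | x :: s' => [seq x :: u | u <- subsets s'] ++ subsets s'
  end.

Definition admissible (t : dtree) (c : seq (seq nat)) : bool :=
  all (fun l => count (fun p => prefix p l) c <= 1) (lvs t).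

Definition cuts (t : dtree) : seq (seq (seq nat)) :=
  [seq c <- subsets (ivs t) | admissible t c].

Definition sub_addr (i : nat) (c : seq (seq nat)) : seq (seq nat) :=
  pmap (fun p => if p is j :: q then if j == i then Some q else None else None) c.

Fixpoint prune (t : dtree) (c : seq (seq nat)) : dtree :=
  if [::] \in c then DLeaf else
  match t with
  | DLeaf => DLeaf
  | DNode c0 r =>
      DNode (prune c0 (sub_addr 0 c))
        ((fix aux (k : nat) (r : seq (A * dtree)) : seq (A * dtree) :=
            match r with
            | [::] => [::]
            | (a, t') :: r' => (a, prune t' (sub_addr k c)) :: aux k.+1 r'
            end) 1 r)
  end.

(* A basis element of H_S(A): a finite product (concatenation) of decorated
   trees; the empty product is the unit 1.  A tree reduced to a single leaf
   (weight 0) is identified with 1. *)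
Definition basis_of_tree (t : dtree) : seq dtree := if is_node t then [:: t] else [::].

Definition pcut (t : dtree) (c : seq (seq nat)) : seq dtree :=
  pmap (subtree t) c.

Definition rcut (t : dtree) (c : seq (seq nat)) : seq dtree :=
  basis_of_tree (prune t c).

Definition delta_tree (t : dtree) : seq (seq dtree * seq dtree) :=
  [seq (rcut t c, pcut t c) | c <- cuts t].

Definition ldelta_tree (t : dtree) : seq (seq dtree * seq dtree) :=
  [seq (rcut t c, pcut t c) |
     c <- cuts t & all (fun p => ~~ prefix p (rightmost_leaf t)) c].

(* Delta extended multiplicatively, in the tensor product (a(x)b)(c(x)d)=ac(x)bd *)
Fixpoint delta (x : seq dtree) : seq (seq dtree * seq dtree) :=
  match x with
  | [::] => [:: ([::], [::])]
  | t :: x' => [seq (u.1 ++ v.1, u.2 ++ v.2) | u <- delta_tree t, v <- delta x']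
  end.

Definition ldelta (x : seq dtree) : seq (seq dtree * seq dtree) :=
  match x with
  | [::] => [::]
  | t :: x' => [seq (u.1 ++ v.1, u.2 ++ v.2) | u <- ldelta_tree t, v <- delta x']
  end.

Definition corolla (t : dtree) : bool :=
  if t is DNode _ _ then all (fun u => ~~ is_node u) (children t) else false.

Definition prime_tree (t : dtree) : bool :=
  (1 < size (lvs t)) && ~~ is_node (last DLeaf (children t)).

End DTrees.

Arguments DLeaf {A}.

Section Forms.
Variables (A : Type) (C : comNzRingType).
Local Open Scope ring_scope.

(* A linear form on H_S(A) is given by its values on the basis of finite
   products of decorated trees. *)
Definition lform := seq (dtree A) -> C.

Definition counit : lform := fun x => if x is [::] then 1 else 0.

Definition prec (f g : lform) : lform :=
  fun x => \sum_(u <- ldelta x) f u.1 * g u.2.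

Definition phi_ext (phi : seq A -> C) : lform :=
  fun x => if x is [:: t] then (if corolla t then phi (word t) else 0) else 0.

Definition Phi_char (phi : seq A -> C) : lform :=
  fun x => \prod_(t <- x) phi_ext phi [:: t].

Definition kappa_tree (phi : seq A -> C) (t : dtree A) : C :=
  if prime_tree t then
    (-1) ^+ (nint t).-1 *
      \prod_(p <- ivs t) phi (root_letters (odflt DLeaf (subtree t p)))
  else 0.

Definition kappa (phi : seq A -> C) : lform :=
  fun x => if x is [:: t] then kappa_tree phi t else 0.

End Forms.

(* Main.v *)
Require Import Defs.
From mathcomp Require Import all_boot all_order all_algebra.
From mathcomp Require Import ring.
Set Implicit Arguments. Unset Strict Implicit. Unset Printing Implicit Defensive.
Import GRing.Theory Num.Theory.

Section Struct.
Variable A : Type.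
Notation T := (dtree A).

Fixpoint Fsnd (P : T -> Prop) (r : seq (A * T)) : Prop :=
  if r is x :: r' then P x.2 /\ Fsnd P r' else True.

Definition dtree_ind2 (P : T -> Prop) (HL : P DLeaf)
  (HN : forall c r, P c -> Fsnd P r -> P (DNode c r)) : forall t, P t :=
  fix F t := match t with
  | DLeaf => HL
  | DNode c r => HN c r (F c)
      ((fix aux r : Fsnd P r := match r with
         | [::] => I | x :: r' => conj (F x.2) (aux r') end) r)
  end.

Lemma Fsnd_nth (P : T -> Prop) c r : P c -> Fsnd P r ->
  forall i, i < size (c :: map snd r) -> P (nth DLeaf (c :: map snd r) i).
Proof.
move=> Pc; elim: r c Pc => [|[a t] r IH] c Pc /=.
  by move=> _ [|i].
case=> Pt Fr [|i] //= Hi.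
by apply: (IH t Pt Fr i).
Qed.

Fixpoint gflat (f : T -> seq (seq nat)) (k : nat) (ts : seq T) : seq (seq nat) :=
  if ts is t :: ts' then [seq k :: p | p <- f t] ++ gflat f k.+1 ts' else [::].

Lemma ivs_node c r : ivs (DNode c r) = [::] :: gflat (@ivs A) 0 (c :: map snd r).
Proof. rewrite /=; congr (_ :: _ ++ _); elim: r 1%N => //= [[a t] r IH] k; by rewrite IH. Qed.

Lemma lvs_node c r : lvs (DNode c r) = gflat (@lvs A) 0 (c :: map snd r).
Proof. rewrite /=; congr (_ ++ _); elim: r 1%N => //= [[a t] r IH] k; by rewrite IH. Qed.

Fixpoint pch k (ts : seq T) cs : seq T :=
  if ts is t :: ts' then prune t (sub_addr k cs) :: pch k.+1 ts' cs else [::].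

Lemma size_pch k ts cs : size (pch k ts cs) = size ts.
Proof. by elim: ts k => //= t ts IH k; rewrite IH. Qed.

Lemma nth_pch k ts cs i : i < size ts ->
  nth DLeaf (pch k ts cs) i = prune (nth DLeaf ts i) (sub_addr (k + i) cs).
Proof.
elim: ts k i => //= t ts IH k [|i] Hi /=; first by rewrite addn0.
by rewrite IH // addSnnS.
Qed.

Lemma prune_node c r cs : [::] \notin cs ->
  exists c' r', prune (DNode c r) cs = DNode c' r' /\
    c' :: map snd r' = pch 0 (c :: map snd r) cs /\ map fst r' = map fst r.
Proof.
move=> H; rewrite /= (negbTE H).
eexists; eexists; split; first reflexivity.
split; first congr (_ :: _).
  by elim: r 1%N => //= [[a t] r IH] k; rewrite map_cons; congr (_ :: _); exact: IH.
by elim: r 1%N => //= [[a t] r IH] k; rewrite map_cons; congr (_ :: _); exact: IH.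
Qed.

Lemma prune_leaf (t : T) cs : [::] \in cs -> prune t cs = DLeaf.
Proof. by case: t => [|c r] /= ->. Qed.

Lemma prune_nil (t : T) : prune t [::] = t.
Proof.
elim/dtree_ind2: t => //= c r -> Hr; congr DNode.
elim: r 1%N Hr => //= [[a t] r IH] k [/= -> Hr]; by rewrite IH.
Qed.


Lemma mem_gflat f k ts p : p \in gflat f k ts ->
  exists i q, [/\ i < size ts, q \in f (nth DLeaf ts i) & p = (k + i)%N :: q].
Proof.
elim: ts k => //= t ts IH k; rewrite mem_cat => /orP [/mapP [q Hq ->]|/IH [i [q [Hi Hq ->]]]].
  by exists 0%N, q; rewrite addn0.
by exists i.+1, q; rewrite addSnnS.
Qed.

Lemma gflat_mem f k ts i q : i < size ts -> q \in f (nth DLeaf ts i) ->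
  (k + i)%N :: q \in gflat f k ts.
Proof.
elim: ts k i => //= t ts IH k [|i] Hi Hq; rewrite mem_cat.
  by rewrite addn0 map_f.
by rewrite -addSnnS IH ?orbT.
Qed.

Lemma big_gflat (R : Type) (idx : R) (op : Monoid.law idx) f k ts (F : seq nat -> R) :
  \big[op/idx]_(p <- gflat f k ts) F p =
  \big[op/idx]_(i < size ts) \big[op/idx]_(q <- f (nth DLeaf ts i)) F ((k + i)%N :: q).
Proof.
elim: ts k => [|t ts IH] k /=; first by rewrite big_nil big_ord0.
rewrite big_cat big_map IH big_ord_recl /=; congr (op _ _).
  by apply: eq_bigr => q _; rewrite addn0.
by apply: eq_bigr => i _; apply: eq_bigr => q _; rewrite addSnnS.
Qed.

End Struct.

Section Subsets.
Variable X : Type.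

Lemma subsets_cat (s1 s2 : seq X) :
  subsets (s1 ++ s2) = [seq u ++ v | u <- subsets s1, v <- subsets s2].
Proof.
elim: s1 => [|x s1 IH] /=; first by rewrite cats0 map_id.
by rewrite IH allpairs_cat map_allpairs allpairs_mapl.
Qed.

Lemma subsets_cons (x : X) s : subsets (x :: s) = [seq x :: u | u <- subsets s] ++ subsets s.
Proof. by []. Qed.

Lemma subsets_map Y (f : X -> Y) s : subsets (map f s) = map (map f) (subsets s).
Proof. by elim: s => //= x s ->; rewrite map_cat -!map_comp. Qed.

End Subsets.

Lemma subsets_sub (X : eqType) (s u : seq X) : u \in subsets s -> {subset u <= s}.
Proof.
elim: s u => [|x s IH] u /=; first by rewrite mem_seq1 => /eqP -> .
rewrite mem_cat => /orP [/mapP [v Hv ->] y|Hu y Hy].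
  by rewrite !in_cons => /orP [->//|/(IH _ Hv) ->]; rewrite orbT.
by rewrite in_cons (IH _ Hu _ Hy) orbT.
Qed.

Lemma count_nil_subsets (X : Type) (s : seq X) : count (@nilp X) (subsets s) = 1%N.
Proof. by elim: s => //= x s IH; rewrite count_cat count_map IH /= -[RHS]add0n; congr addn; elim: (subsets s). Qed.

Lemma sub_addr_cat i u v : sub_addr i (u ++ v) = sub_addr i u ++ sub_addr i v.
Proof. exact: pmap_cat. Qed.

Lemma sub_addr_map j k a : sub_addr j [seq k :: q | q <- a] = if k == j then a else [::].
Proof. by elim: a => [|q a IH] /=; [case: eqP|rewrite /sub_addr /= -/(sub_addr j _) IH; case: eqP]. Qed.

Lemma sub_addr_none j v : all (fun p => if p is i :: _ then i != j else true) v ->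
  sub_addr j v = [::].
Proof.
by elim: v => //= [[|i q] v IH] /andP [H1 H2]; rewrite /sub_addr /= -/(sub_addr j _) ?(negbTE H1) IH.
Qed.

Lemma sub_addr_cons j i q u : sub_addr j ((i :: q) :: u) =
  if i == j then q :: sub_addr j u else sub_addr j u.
Proof. by rewrite /sub_addr /=; case: eqP. Qed.

Lemma sub_addr_consnil j u : sub_addr j ([::] :: u) = sub_addr j u.
Proof. by []. Qed.

Lemma sub_addr_nil j : sub_addr j [::] = [::].
Proof. by []. Qed.

Arguments sub_addr : simpl never.

Section Sum.
Variable A : Type.
Notation T := (dtree A).
Local Open Scope ring_scope.

Lemma subsets_gflat_heads f k (ts : seq T) v : v \in subsets (gflat f k ts) ->
  forall p, p \in v -> exists i q, [/\ (i < size ts)%N, q \in f (nth DLeaf ts i) & p = (k + i)%N :: q].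
Proof. move=> Hv p Hp; exact: mem_gflat (subsets_sub Hv Hp). Qed.

Lemma sum_gflat (R : comNzRingType) (h : nat -> seq (seq nat) -> R) k (ts : seq T) :
  \sum_(u <- subsets (gflat (@ivs A) k ts)) \prod_(i < size ts) h i (sub_addr (k + i) u)
  = \prod_(i < size ts) \sum_(a <- subsets (ivs (nth DLeaf ts i))) h i a.
Proof.
elim: ts k h => [|t ts IH] k h /=; first by rewrite big_ord0 big_seq1 big_ord0.
rewrite subsets_cat subsets_map big_allpairs_dep big_map big_ord_recl.
rewrite big_distrl /=; apply: eq_bigr => a _.
rewrite -(IH k.+1 (fun i => h i.+1)) big_distrr big_seq [RHS]big_seq /=.
apply: eq_bigr => v Hv; rewrite big_ord_recl; congr (_ * _).
  rewrite addn0 sub_addr_cat sub_addr_map eqxx sub_addr_none ?cats0 //.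
  apply/allP => p /(subsets_gflat_heads Hv) [i [q [_ _ ->]]].
  by rewrite gtn_eqF // addSn ltnS leq_addr.
apply: eq_bigr => i _; rewrite sub_addr_cat sub_addr_map /= addnS addSn.
by rewrite ltn_eqF // ltnS leq_addr.
Qed.

End Sum.

Section Node.
Variable A : Type.
Notation T := (dtree A).
Implicit Types (c : T) (r : seq (A * T)).

Lemma subtree_cons c r i q : i < size (c :: map snd r) ->
  subtree (DNode c r) (i :: q) = subtree (nth DLeaf (c :: map snd r) i) q.
Proof. by move=> Hi; rewrite /= /child /= Hi. Qed.

Lemma size_gflat f k (ts : seq T) :
  size (gflat f k ts) = \sum_(i < size ts) size (f (nth DLeaf ts i)).
Proof.
elim: ts k => [|t ts IH] k /=; first by rewrite big_ord0.
by rewrite size_cat size_map IH big_ord_recl.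
Qed.

Lemma nint_node c r : nint (DNode c r) =
  (\sum_(i < size (c :: map snd r)) nint (nth DLeaf (c :: map snd r) i)).+1.
Proof. rewrite /nint ivs_node. by have := size_gflat (@ivs A) 0 (c :: map snd r); move=> <-. Qed.

Lemma size_lvs_node c r : size (lvs (DNode c r)) =
  \sum_(i < size (c :: map snd r)) size (lvs (nth DLeaf (c :: map snd r) i)).
Proof. by rewrite lvs_node size_gflat. Qed.

Lemma lvs_gt0 (t : T) : 0 < size (lvs t).
Proof.
elim/dtree_ind2: t => // c r Hc _; rewrite lvs_node /= size_cat size_map.
by rewrite (leq_trans Hc) ?leq_addr.
Qed.

Lemma last_gflat f k (t : T) ts : (forall s, 0 < size (f s)) ->
  last [::] (gflat f k (t :: ts)) = (k + size ts)%N :: last [::] (f (last t ts)).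
Proof.
move=> Hf; elim: ts k t => [|t' ts IH] k t.
  rewrite /= cats0 addn0; have := Hf t; case: (f t) => //= x s _.
  by rewrite last_map.
change (last [::] ([seq k :: p | p <- f t] ++ gflat f k.+1 (t' :: ts)) =
  (k + size (t' :: ts))%N :: last [::] (f (last t (t' :: ts)))).
rewrite last_cat.
have H : forall (x y : seq nat) s, 0 < size s -> last x s = last y s by move=> x y [].
rewrite (H _ [::]); first by rewrite IH /= addSnnS.
by rewrite /= size_cat size_map (leq_trans (Hf t')) ?leq_addr.
Qed.

Lemma rml_node c r : rightmost_leaf (DNode c r) =
  size r :: rightmost_leaf (last c (map snd r)).
Proof. by rewrite /rightmost_leaf lvs_node last_gflat ?size_map // => s; apply: lvs_gt0. Qed.

Lemma ivs_prefix (t : T) q : q \in ivs t -> exists2 l, l \in lvs t & prefix q l.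
Proof.
elim/dtree_ind2: t q => [|c r Hc Hr] q; first by [].
rewrite ivs_node in_cons => /orP [/eqP ->|].
  exists (nth [::] (lvs (DNode c r)) 0); last by case: (nth _ _ _). exact: (@mem_nth _ [::] (lvs (DNode c r)) 0 (lvs_gt0 _)).
move/mem_gflat => [i [q' [Hi Hq ->]]].
have [l Hl Hp] := Fsnd_nth Hc Hr Hi q' Hq.
exists ((0 + i)%N :: l); first by rewrite lvs_node gflat_mem.
by rewrite /= eqxx.
Qed.

Lemma count_prefix_cons (u : seq (seq nat)) i l :
  count (fun p => prefix p (i :: l)) u =
  (count (fun p : seq nat => p == [::]) u + count (fun q => prefix q l) (sub_addr i u))%N.
Proof.
elim: u => //= [[|j q] u IH]; first by rewrite IH /= sub_addr_consnil addnA.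
rewrite IH sub_addr_cons; case: eqP => [->|Hji] /=; first by rewrite addnCA.
by rewrite !add0n.
Qed.

Definition nonil (u : seq (seq nat)) := all (fun p : seq nat => p != [::]) u.

Lemma count_nonil (u : seq (seq nat)) : nonil u -> count (fun p : seq nat => p == [::]) u = 0%N.
Proof. by move=> H; apply/eqP; rewrite -leqn0 leqNgt -has_count -all_predC. Qed.

Lemma adm_node c r u : nonil u ->
  admissible (DNode c r) u = \big[andb/true]_(i < size (c :: map snd r))
     admissible (nth DLeaf (c :: map snd r) i) (sub_addr i u).
Proof.
move=> Hu; rewrite /admissible lvs_node -big_all big_gflat.
apply: eq_bigr => i _; rewrite -big_all; apply: eq_bigr => l _.
by rewrite count_prefix_cons count_nonil.
Qed.

Lemma avoid_cons (u : seq (seq nat)) i l : nonil u ->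
  all (fun p => ~~ prefix p (i :: l)) u = all (fun q => ~~ prefix q l) (sub_addr i u).
Proof.
elim: u => // [[|j q] u IH] /andP [H1 H2] //.
by rewrite /= IH // sub_addr_cons; case: (j == i).
Qed.

Lemma word_corolla c r : all (fun u => ~~ is_node u) (c :: map snd r) ->
  word (DNode c r) = map fst r.
Proof.
case: c => [|c0 r0] /=; last by [].
elim: r => //= [[a t] r IH] /andP [Ht Hr]; case: t Ht => // _.
by move: (IH Hr) => /= ->.
Qed.

End Node.

Lemma prod_sub_addr (R : comNzRingType) n (F : seq nat -> R) u :
  all (fun p => if p is i :: _ then i < n else false) u ->
  (\prod_(p <- u) F p = \prod_(i < n) \prod_(q <- sub_addr i u) F (nat_of_ord i :: q))%R.
Proof.
elim: u => [|[|j q] u IH] //=.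
  by move=> _; rewrite big_nil big1 // => i _; rewrite sub_addr_nil big_nil.
case/andP=> Hj Hu; rewrite big_cons IH //.
rewrite (bigD1 (Ordinal Hj)) //= [in RHS](bigD1 (Ordinal Hj)) //=.
rewrite sub_addr_cons eqxx big_cons mulrA; congr (_ * _)%R.
apply: eq_bigr => i Hi; rewrite sub_addr_cons; case: eqP => // Hji.
by case/eqP: Hi; apply: val_inj.
Qed.

Section Forms.
Variable A : Type.
Notation T := (dtree A).
Implicit Types (c : T) (r : seq (A * T)).
Variable R : comNzRingType.
Variable phi : seq A -> R.
Local Open Scope ring_scope.

Definition ph1 (t : T) := phi_ext phi [:: t].
Definition Qv (t : T) := \prod_(p <- ivs t) phi (root_letters (odflt DLeaf (subtree t p))).
Definition Wv (t : T) u := (-1) ^+ nint (prune t u) * Qv (prune t u) * Phi_char phi (pcut t u).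

Definition headsOK (n : nat) (u : seq (seq nat)) := all (fun p => if p is i :: _ then (i < n)%N else false) u.

Lemma Qv_node c r : Qv (DNode c r) =
  phi (map fst r) * \prod_(i < size (c :: map snd r)) Qv (nth DLeaf (c :: map snd r) i).
Proof.
rewrite /Qv ivs_node big_cons big_gflat; congr (_ * _).
apply: eq_bigr => i _; apply: eq_bigr => q _.
by rewrite add0n subtree_cons.
Qed.

Lemma Phi_pcut_node c r u : headsOK (size (c :: map snd r)) u ->
  Phi_char phi (pcut (DNode c r) u) =
  \prod_(i < size (c :: map snd r)) Phi_char phi (pcut (nth DLeaf (c :: map snd r) i) (sub_addr i u)).
Proof.
move=> Hu; rewrite /Phi_char /pcut big_pmap (prod_sub_addr _ Hu).
apply: eq_bigr => i _; rewrite [in RHS]big_pmap; apply: eq_bigr => q _.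
by rewrite subtree_cons.
Qed.

Lemma prune_node_eq c r u : nonil u -> exists c' r',
  [/\ prune (DNode c r) u = DNode c' r',
     c' :: map snd r' = pch 0 (c :: map snd r) u & map fst r' = map fst r].
Proof.
move=> Hu; have Hn : [::] \notin u.
  by apply/negP => /(allP Hu); rewrite eqxx.
have [c' [r' [H1 [H2 H3]]]] := prune_node c r Hn; by exists c', r'.
Qed.

Lemma nint_prune c r u : nonil u -> nint (prune (DNode c r) u) =
  (\sum_(i < size (c :: map snd r)) nint (prune (nth DLeaf (c :: map snd r) i) (sub_addr i u))).+1.
Proof.
move=> /(prune_node_eq c r) [c' [r' [-> H2 _]]].
rewrite nint_node H2 (size_pch 0 (c :: map snd r) u); congr _.+1.
by apply: eq_bigr => i _; rewrite nth_pch.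
Qed.

Lemma Qv_prune c r u : nonil u -> Qv (prune (DNode c r) u) =
  phi (map fst r) * \prod_(i < size (c :: map snd r)) Qv (prune (nth DLeaf (c :: map snd r) i) (sub_addr i u)).
Proof.
move=> /(prune_node_eq c r) [c' [r' [-> H2 H3]]].
rewrite Qv_node H2 H3 (size_pch 0 (c :: map snd r) u); congr (_ * _).
by apply: eq_bigr => i _; rewrite nth_pch.
Qed.

Lemma size_lvs_prune c r u : nonil u -> size (lvs (prune (DNode c r) u)) =
  (\sum_(i < size (c :: map snd r)) size (lvs (prune (nth DLeaf (c :: map snd r) i) (sub_addr i u))))%N.
Proof.
move=> /(prune_node_eq c r) [c' [r' [-> H2 H3]]].
rewrite size_lvs_node H2 (size_pch 0 (c :: map snd r) u).
by apply: eq_bigr => i _; rewrite nth_pch.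
Qed.

Lemma last_prune c r u : nonil u ->
  last DLeaf (children (prune (DNode c r) u)) = prune (last c (map snd r)) (sub_addr (size r) u).
Proof.
move=> /(prune_node_eq c r) [c' [r' [-> H2 H3]]].
have L : forall (x y : T) s, last x s = nth y (x :: s) (size s).
  by move=> x y s; elim: s x => //= z s IH x; rewrite IH.
have Hs : size r' = size r by rewrite -(size_map fst r') H3 size_map.
rewrite /= (L _ DLeaf) H2 size_map Hs nth_pch ?size_pch /= ?size_map //.
by rewrite add0n (L c DLeaf) size_map.
Qed.

End Forms.

Section Sw.
Variable A : Type.
Notation T := (dtree A).
Implicit Types (c : T) (r : seq (A * T)).
Variable R : comNzRingType.
Variable phi : seq A -> R.
Local Open Scope ring_scope.

Notation Wv := (Wv phi).
Notation ph1 := (ph1 phi).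

Definition Sw (t : T) := \sum_(u <- subsets (ivs t)) (admissible t u)%:R * Wv t u.

Lemma gflat_ok c r u : u \in subsets (gflat (@ivs A) 0 (c :: map snd r)) ->
  nonil u && headsOK (size (c :: map snd r)) u.
Proof.
move=> Hu; rewrite -all_predI; apply/allP => p /(subsets_gflat_heads Hu) [i [q [Hi _ ->]]].
by rewrite /= add0n Hi.
Qed.

Lemma adm_root c r u : u \in subsets (gflat (@ivs A) 0 (c :: map snd r)) ->
  admissible (DNode c r) ([::] :: u) = nilp u.
Proof.
case: u => [_|p u Hu].
  by apply/allP => l _ /=; case: l.
apply/negbTE/negP => /allP H.
have [i [q [Hi Hq Hp]]] := subsets_gflat_heads Hu (mem_head p u).
have [l Hl Hql] := ivs_prefix Hq.
have := H ((0 + i)%N :: l); rewrite lvs_node gflat_mem // => /(_ isT).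
by rewrite /= Hp /= eqxx Hql.
Qed.

Lemma Wv_root c r : Wv (DNode c r) [:: [::]] = ph1 (DNode c r).
Proof.
rewrite /Wv prune_leaf ?mem_head // /Qv /= big_nil /Phi_char big_seq1.
by rewrite expr0 !mul1r.
Qed.

Lemma natr_bigand n (b : 'I_n -> bool) :
  ((\big[andb/true]_(i < n) b i)%:R : R) = \prod_(i < n) (b i)%:R.
Proof. by apply: (big_morph (fun x : bool => (x%:R : R))) => // [[] []] /=; rewrite ?mul1r ?mul0r. Qed.

Lemma Wv_node c r u : nonil u -> headsOK (size (c :: map snd r)) u ->
  (admissible (DNode c r) u)%:R * Wv (DNode c r) u =
  - phi (map fst r) * \prod_(i < size (c :: map snd r))
      ((admissible (nth DLeaf (c :: map snd r) i) (sub_addr i u))%:R *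
       Wv (nth DLeaf (c :: map snd r) i) (sub_addr i u)).
Proof.
move=> H1 H2; rewrite adm_node // natr_bigand /Wv nint_prune // Qv_prune //.
rewrite Phi_pcut_node // exprS expr_sum !big_split /=.
ring.
Qed.

Lemma sum_nilp (X : Type) (s : seq (seq X)) (F : seq X -> R) :
  \sum_(u <- s) (nilp u)%:R * F u = (count (@nilp X) s)%:R * F [::].
Proof.
elim: s => [|u s IH]; first by rewrite big_nil mul0r.
rewrite big_cons IH /= natrD mulrDl; congr (_ + _).
by case: u => [|x u]; rewrite /= ?mul0r.
Qed.

Lemma Sw_node c r : Sw (DNode c r) =
  ph1 (DNode c r) - phi (map fst r) * \prod_(i < size (c :: map snd r)) Sw (nth DLeaf (c :: map snd r) i).
Proof.
rewrite /Sw ivs_node subsets_cons big_cat big_map; congr (_ + _).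
  rewrite big_seq (eq_bigr (fun u => (nilp u)%:R * Wv (DNode c r) ([::] :: u))); last first.
    by move=> u Hu; rewrite adm_root.
  by rewrite -big_seq sum_nilp count_nil_subsets mul1r Wv_root.
rewrite big_seq (eq_bigr (fun u => - phi (map fst r) * \prod_(i < size (c :: map snd r))
      ((admissible (nth DLeaf (c :: map snd r) i) (sub_addr (0 + i) u))%:R *
       Wv (nth DLeaf (c :: map snd r) i) (sub_addr (0 + i) u)))); last first.
  by move=> u /gflat_ok /andP [H1 H2]; rewrite Wv_node //.
rewrite -big_seq -big_distrr (sum_gflat (fun i a => (admissible (nth DLeaf (c :: map snd r) i) a)%:R * Wv (nth DLeaf (c :: map snd r) i) a)) /= mulNr.
by [].
Qed.

Lemma Sw_val (t : T) : Sw t = (~~ is_node t)%:R.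
Proof.
elim/dtree_ind2: t => [|c r Hc Hr].
  by rewrite /Sw /= big_seq1 /Wv /= /Qv /= big_nil /Phi_char /= big_nil !mulr1.
have IH := Fsnd_nth Hc Hr.
rewrite Sw_node /= /ph1 /phi_ext.
case Hcor: (corolla (DNode c r)).
  have Hall : all (fun u => ~~ is_node u) (c :: map snd r) by [].
  rewrite word_corolla // big1 ?mulr1 ?subrr // => i _.
  by rewrite IH ?ltn_ord // ((all_nthP DLeaf Hall) i (ltn_ord i)).
have : has (@is_node A) (c :: map snd r).
  move/negbT: Hcor; rewrite /corolla /children -has_predC; apply: sub_has => u /=; by rewrite negbK.
case/(has_nthP DLeaf) => i Hi Hn.
by rewrite (bigD1 (Ordinal Hi)) //= IH // Hn mul0r mulr0 subrr.
Qed.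

Lemma Tv_val (s : T) : \sum_(a <- subsets (ivs s)) (admissible s a)%:R * Wv s a *
   ((all (fun q => ~~ prefix q (rightmost_leaf s)) a)%:R * (~~ is_node (prune s a))%:R)
   = (~~ is_node s)%:R.
Proof.
case: s => [|c r].
  by rewrite /= big_seq1 /Wv /= /Qv /= big_nil /Phi_char /= big_nil !mulr1.
rewrite ivs_node subsets_cons big_cat big_map big1 ?add0r.
  rewrite big_seq big1; first by rewrite /= addr0.
  move=> u /gflat_ok /andP [H1 _].
  by have [c' [r' [-> _ _]]] := prune_node_eq c r H1; rewrite /= !mulr0.
by move=> u _; rewrite rml_node /= mul0r mulr0.
Qed.

Lemma ifb (b : bool) (x : R) : (if b then x else 0) = b%:R * x.
Proof. by case: b; rewrite ?mul1r ?mul0r. Qed.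

Lemma natr_andb (a b : bool) : ((a && b)%:R : R) = a%:R * b%:R.
Proof. by case: a; case: b; rewrite /= ?mul1r ?mul0r. Qed.

Lemma prod_if1 n (j : nat) (F : 'I_n -> R) (Hj : (j < n)%N) :
  \prod_(i < n) (if (nat_of_ord i == j) then F i else 1) = F (Ordinal Hj).
Proof.
rewrite (bigD1 (Ordinal Hj)) //= eqxx big1 ?mulr1 // => i Hi.
case: eqP => // Hij; case/eqP: Hi; exact: val_inj.
Qed.

Lemma last_nth_ch c r : last c (map snd r) = nth DLeaf (c :: map snd r) (size r).
Proof.
have L : forall (x y : T) s, last x s = nth y (x :: s) (size s).
  by move=> x y s; elim: s x => //= z s IH x; rewrite IH.
by rewrite (L c DLeaf) size_map.
Qed.

Definition hM c r (i : nat) (a : seq (seq nat)) : R :=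
  (admissible (nth DLeaf (c :: map snd r) i) a)%:R * Wv (nth DLeaf (c :: map snd r) i) a *
  (if i == size r then
     (all (fun q => ~~ prefix q (rightmost_leaf (nth DLeaf (c :: map snd r) i))) a)%:R *
     (~~ is_node (prune (nth DLeaf (c :: map snd r) i) a))%:R else 1).

Lemma term_node c r u : (0 < size r)%N -> nonil u -> headsOK (size (c :: map snd r)) u ->
  (if admissible (DNode c r) u && all (fun p => ~~ prefix p (rightmost_leaf (DNode c r))) u
   then kappa_tree phi (prune (DNode c r) u) * Phi_char phi (pcut (DNode c r) u) else 0)
  = phi (map fst r) * \prod_(i < size (c :: map snd r)) hM c r i (sub_addr i u).
Proof.
move=> Hr H1 H2.
rewrite rml_node avoid_cons // adm_node // /kappa_tree /prime_tree.
rewrite size_lvs_prune // last_prune // nint_prune // succnK.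
have Hlv : (1 < \sum_(i < size (c :: map snd r))
    size (lvs (prune (nth DLeaf (c :: map snd r) i) (sub_addr i u))))%N.
  apply: (@leq_trans (\sum_(i < size (c :: map snd r)) 1)%N).
    by rewrite sum1_card card_ord /= size_map ltnS.
  by apply: leq_sum => i _; apply: lvs_gt0.
rewrite Hlv andTb !ifb !natr_andb natr_bigand -/(Qv phi (prune (DNode c r) u)) Qv_prune // Phi_pcut_node // expr_sum.
have Hlt : (size r < size (c :: map snd r))%N by rewrite /= size_map.
rewrite /hM !big_split /= (prod_if1 _ Hlt) /= -last_nth_ch.
ring.
Qed.

Lemma main_tree c r : (0 < size r)%N ->
  \sum_(cc <- cuts (DNode c r) | all (fun p => ~~ prefix p (rightmost_leaf (DNode c r))) cc)
     kappa_tree phi (prune (DNode c r) cc) * Phi_char phi (pcut (DNode c r) cc)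
  = ph1 (DNode c r).
Proof.
move=> Hr.
rewrite /cuts big_filter_cond big_mkcond ivs_node subsets_cons big_cat big_map big1 ?add0r.
  rewrite big_seq (eq_bigr (fun u => phi (map fst r) *
      \prod_(i < size (c :: map snd r)) hM c r (0 + i) (sub_addr (0 + i) u))); last first.
    by move=> u /gflat_ok /andP [H1 H2]; rewrite term_node.
  rewrite -big_seq -big_distrr (sum_gflat (hM c r)) /=.
  rewrite (eq_bigr (fun i : 'I_(size (c :: map snd r)) =>
     (~~ is_node (nth DLeaf (c :: map snd r) i))%:R)); last first.
    move=> i _; rewrite /hM; case: eqP => [_|_]; first exact: Tv_val.
    by rewrite (eq_bigr _ (fun a _ => mulr1 _)); exact: Sw_val.
  rewrite Monoid.simpm.
  rewrite /ph1 /phi_ext.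
  case Hcor: (corolla (DNode c r)).
    have Hall : all (fun u => ~~ is_node u) (c :: map snd r) by [].
    rewrite word_corolla // big1 ?mulr1 // => i _.
    by rewrite ((all_nthP DLeaf Hall) i (ltn_ord i)).
  have : has (@is_node A) (c :: map snd r).
    move/negbT: Hcor; rewrite /corolla /children -has_predC; apply: sub_has => u /=; by rewrite negbK.
  case/(has_nthP DLeaf) => i Hi Hn.
  by rewrite (bigD1 (Ordinal Hi)) //= Hn mul0r mulr0.
by move=> u _; rewrite rml_node /= andbF.
Qed.

End Sw.

Section Final.
Variable A : Type.
Notation T := (dtree A).
Variable R : comNzRingType.
Variable phi : seq A -> R.
Local Open Scope ring_scope.

Lemma rcut_nonil (t : T) u : is_node t -> nonil u -> rcut t u = [:: prune t u].
Proof.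
case: t => // c r _ H1; have [c' [r' [E _ _]]] := prune_node_eq c r H1.
by rewrite /rcut E.
Qed.

Lemma E_tree (t : T) : is_node t ->
  \sum_(u <- delta_tree t) (nilp u.1)%:R * Phi_char phi u.2 = ph1 phi t.
Proof.
case: t => // c r _; rewrite /delta_tree big_map /cuts big_filter big_mkcond.
have H2 : \sum_(u <- subsets (gflat (@ivs A) 0 (c :: map snd r)))
   (if admissible (DNode c r) u then (nilp (rcut (DNode c r) u))%:R *
      Phi_char phi (pcut (DNode c r) u) else 0) = 0.
  rewrite big_seq big1 // => u /gflat_ok /andP [H1 _].
  by case: ifP => // _; rewrite rcut_nonil //= mul0r.
have H1 : \sum_(u <- subsets (gflat (@ivs A) 0 (c :: map snd r)))
   (if admissible (DNode c r) ([::] :: u) then (nilp (rcut (DNode c r) ([::] :: u)))%:R *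
      Phi_char phi (pcut (DNode c r) ([::] :: u)) else 0) = ph1 phi (DNode c r).
  rewrite big_seq (eq_bigr (fun u => (nilp u)%:R * Phi_char phi (pcut (DNode c r) [:: [::]]))); last first.
    move=> u Hu; rewrite adm_root // ifb /rcut prune_leaf ?mem_head //=.
    by case: u Hu => [|p u] Hu /=; rewrite !mul1r ?mul0r.
  by rewrite -big_seq sum_nilp count_nil_subsets mul1r /pcut /= /Phi_char big_seq1.
rewrite ivs_node subsets_cons big_cat big_map.
by rewrite H1 H2 Monoid.simpm.
Qed.

Lemma D_forest (x : seq T) : all (fun t => is_node t) x ->
  \sum_(b <- delta x) (nilp b.1)%:R * Phi_char phi b.2 = Phi_char phi x.
Proof.
elim: x => [|t x IH] /=; first by rewrite big_seq1 /Phi_char big_nil mulr1.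
case/andP => Ht Hx; rewrite big_allpairs_dep /Phi_char big_cons -/(ph1 phi t) -(E_tree Ht).
rewrite -/(Phi_char phi x) -(IH Hx) big_distrl /=; apply: eq_bigr => u _.
rewrite big_distrr /=; apply: eq_bigr => v _.
rewrite /Phi_char big_cat /=.
case: u.1 => [|a s] /=; case: v.1 => [|a' s'] //=; rewrite ?mul0r ?mulr0 ?mul1r //.
Qed.

End Final.

Local Open Scope ring_scope.

Theorem mainTheorem8 (A : Type) (C : numClosedFieldType) (phi : seq A -> C)
    (x : seq (dtree A)) :
  all (@dtree_ok A) x ->
  Phi_char phi x = counit C x + prec (kappa phi) (Phi_char phi) x.
Proof.
case: x => [|t x] /=.
  by move=> _; rewrite /Phi_char /prec /= !big_nil GRing.addr0.
case/andP => Ht Hx.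
rewrite GRing.add0r /prec /ldelta big_allpairs_dep /ldelta_tree big_map big_filter.
have Hnode : is_node t by case/andP: Ht.
case: t Ht Hnode => // c r /andP [_ /= /andP [Hr _]] _.
rewrite /Phi_char big_cons -/(ph1 phi (DNode c r)) -(@main_tree A C phi c r); last by case: r Hr.
rewrite -/(Phi_char phi x) GRing.mulr_suml; apply: eq_bigr => cc Hcc.
have Hn : nonil cc.
  apply: sub_all Hcc => p; apply: contra => /eqP ->; by case: (rightmost_leaf _).
rewrite rcut_nonil //.
have Hx' : all (fun t => is_node t) x by apply: sub_all Hx => t /andP [].
rewrite -(D_forest phi Hx') GRing.mulr_sumr; apply: eq_bigr => v _.
rewrite /Phi_char big_cat /= -/(Phi_char phi (pcut _ _)) -/(Phi_char phi v.2).
by case: v.1 => [|a s] /=; rewrite ?cats0 ?GRing.mul1r ?GRing.mul0r ?GRing.mulr0 // GRing.mulrA.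
Qed.
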